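(* If there exists an $(N,NK,M,R)$ $\mathcal D_{RS}$-non-private scheme, then there exists an $(N,K,M,R)$-private scheme.
   Context: Files $W_0,\dots,W_{N-1}$ independent, each uniform on $[2^F]=\{0,\dots,2^F-1\}$, $\bar W=(W_0,\dots,W_{N-1})$; $[n]=\{0,\dots,n-1\}$. Non-private scheme for $N$ files and $L$ users with memory $M$ and rate $R$: cache encoders $C_j:[2^F]^N\to[2^{MF}]$ ($j\in[L]$), transmission encoder $E:[2^F]^N\times[N]^L\to[2^{RF}]$ (the demand vector is also transmitted), and decoders $G_j$ with $W_{d_j}=G_j(\bar d,E(\bar W,\bar d),C_j(\bar W))$. For a subset $\mathcal D\subseteq[N]^L$ of demand vectors, a $\mathcal D$-non-private scheme is one for which this decoding condition holds for all $\bar W$ and all $\bar d\in\mathcal D$. Restricted demand subset $\mathcal D_{RS}$ for $N$ files and $L=NK$ users: writing $\bar d\in[N]^{NK}$ as $K$ consecutive blocks $(\bar d^{(0)},\dots,\bar d^{(K-1)})$ of length $N$, $\mathcal D_{RS}$ is the set of all $\bar d$ such that each block $\bar d^{(i)}$ is a cyclic shift of $(0,1,\dots,N-1)$. Private scheme $(N,K,M,R)$: $K$ users with independent uniform demands $D_k\in[N]$, $\bar D=(D_0,\dots,D_{K-1})$, $\tilde D_k$ = all demands except $D_k$; user $k$ shares a key $S_k$ (finite alphabet) with the server, server private randomness $P$ (finite alphabet), all of $P$, $S_k$, $D_k$, $W_i$ mutually independent; cache $Z_k=(C_k(S_k,P,\bar W),S_k)$ with $C_k$ valued in $[2^{MF}]$;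 broadcast $X=(E(\bar W,\bar D,P,\bar S),J(\bar D,P,\bar S))$ with $E$ valued in $[2^{RF}]$ and $J$ valued in a finite set whose $\log_2$-size is negligible compared to $F$; user $k$ recovers $W_{D_k}$ exactly from $(D_k,S_k,X,Z_k)$; and $I(\tilde D_k;Z_k,X,D_k)=0$ for all $k$. *)

(* Defs.v *)
From HB Require Import structures.
From mathcomp Require Import all_boot all_order all_algebra.
From mathcomp Require Import all_classical all_reals all_analysis.

Set Implicit Arguments. Unset Strict Implicit. Unset Printing Implicit Defensive.
Import Order.TTheory GRing.Theory Num.Theory.
Local Open Scope ring_scope.

(* File library: N files of F bits each, W_i in [2^F]. *)
Definition files (N F : nat) := {ffun 'I_N -> 'I_(2 ^ F)}.

(* Caches take M*F bits, i.e. values in [2^(mF)] with mF = M*F;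
   the transmission takes R*F bits, i.e. values in [2^(rF)] with rF = R*F.
   The demand vector d is given to the decoders (it is also transmitted). *)
Definition nonprivate_scheme (N L F mF rF : nat)
    (D : {ffun 'I_L -> 'I_N} -> Prop) : Prop :=
  exists (C : 'I_L -> files N F -> 'I_(2 ^ mF))
         (E : files N F -> {ffun 'I_L -> 'I_N} -> 'I_(2 ^ rF))
         (G : 'I_L -> {ffun 'I_L -> 'I_N} -> 'I_(2 ^ rF) -> 'I_(2 ^ mF)
                -> 'I_(2 ^ F)),
    forall (W : files N F) (d : {ffun 'I_L -> 'I_N}), D d ->
      forall j : 'I_L, W (d j) = G j d (E W d) (C j W).

(* Restricted demand subset D_RS for N files and N*K users: the j-th entry
   (j = i*N + n, block i, position n < N) of each block i is (n + s_i) mod N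
   for some shift s_i, i.e. each block is a cyclic shift of (0,1,...,N-1). *)
Definition D_RS (N K : nat) (d : {ffun 'I_(N * K) -> 'I_N}) : Prop :=
  exists s : nat -> nat,
    forall j : 'I_(N * K), (nat_of_ord (d j) = ((j %% N) + s (j %/ N)) %% N)%N.

Section Info.
Variable R : realType.

Definition log2 (x : R) : R := ln x / ln 2.

Definition prob_of (Om A : finType) (p : Om -> R) (X : Om -> A) (a : A) : R :=
  \sum_(w : Om | X w == a) p w.

Definition mutual_info (Om A B : finType) (p : Om -> R)
    (X : Om -> A) (Y : Om -> B) : R :=
  \sum_(a : A) \sum_(b : B)
     let pab := prob_of p (fun w => (X w, Y w)) (a, b) in
     if pab == 0 then 0
     else pab * log2 (pab / (prob_of p X a * prob_of p Y b)).
End Info.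

(* Sample space: files, demands, server randomness P, keys (S_k)_k.
   The pmf is the product of: uniform files, uniform demands, the law pP of
   P and the laws pS k of the keys S_k (so all are mutually independent).
   J takes values in TJ with #|TJ| <= B, where B will depend only on N, K
   (so log2 #|TJ| is negligible compared to F). *)
Definition private_scheme (R : realType) (N K F mF rF B : nat) : Prop :=
  exists (TP TS TJ : finType) (pP : TP -> R) (pS : 'I_K -> TS -> R),
    [/\ (forall p, 0 <= pP p), \sum_(p : TP) pP p = 1,
        (forall k s, 0 <= pS k s), (forall k, \sum_(s : TS) pS k s = 1)
      & (#|TJ| <= B)%N] /\
    exists (C : 'I_K -> TS -> TP -> files N F -> 'I_(2 ^ mF))
           (E : files N F -> {ffun 'I_K -> 'I_N} -> TP -> {ffun 'I_K -> TS}
                  -> 'I_(2 ^ rF))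
           (J : {ffun 'I_K -> 'I_N} -> TP -> {ffun 'I_K -> TS} -> TJ)
           (G : 'I_K -> 'I_N -> TS -> ('I_(2 ^ rF) * TJ)
                  -> ('I_(2 ^ mF) * TS) -> 'I_(2 ^ F)),
      let Om := (files N F * {ffun 'I_K -> 'I_N} * TP * {ffun 'I_K -> TS})%type in
      let prob (w : Om) : R :=
        let: (_, _, Pw, Sw) := w in
        (2 ^ F)%:R ^- N * N%:R ^- K * pP Pw * \prod_(k < K) pS k (Sw k) in
      let Wv (w : Om) := let: (W, _, _, _) := w in W in
      let Dv (w : Om) := let: (_, Dm, _, _) := w in Dm in
      let Pv (w : Om) := let: (_, _, Pw, _) := w in Pw in
      let Sv (w : Om) := let: (_, _, _, Sw) := w in Sw in
      let Z (k : 'I_K) (w : Om) := (C k (Sv w k) (Pv w) (Wv w), Sv w k) in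
      let X (w : Om) := (E (Wv w) (Dv w) (Pv w) (Sv w), J (Dv w) (Pv w) (Sv w)) in
      let Dtilde (k : 'I_K) (w : Om) :=
        [ffun j : {j : 'I_K | j != k} => Dv w (val j)] in
      (forall (w : Om), prob w != 0 -> forall k : 'I_K,
          Wv w (Dv w k) = G k (Dv w k) (Sv w k) (X w) (Z k w)) /\
      (forall k : 'I_K,
          mutual_info prob (Dtilde k) (fun w => (Z k w, X w, Dv w k)) = 0).

(* Main.v *)
Require Import Defs.
From HB Require Import structures.
From mathcomp Require Import all_boot all_order all_algebra.
From mathcomp Require Import all_classical all_reals all_analysis.
From mathcomp Require Import ring.
Set Implicit Arguments. Unset Strict Implicit. Unset Printing Implicit Defensive.
Import Order.TTheory GRing.Theory Num.Theory.
Local Open Scope ring_scope.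

Lemma sum_const_pred (R : realType) (Om U : finType) (c : R) (phi : Om -> U)
  (P : pred U) : bijective phi ->
  \sum_(w | P (phi w)) c = c * #|P|%:R.
Proof.
move=> bphi.
rewrite -(reindex phi (P := P) (F := fun _ => c)); last first.
  by case: bphi => g h1 h2; exists g => z _ //.
by rewrite sumr_const mulr_natr.
Qed.

Lemma indep_const (R : realType) (Om U V A B : finType) (c : R)
  (phi : Om -> U * V) (x : U -> A) (y : V -> B) :
  bijective phi -> c * #|Om|%:R = 1 ->
  mutual_info (fun _ : Om => c) (fun w => x (phi w).1) (fun w => y (phi w).2) = 0.
Proof.
move=> bphi hc.
have cardOm : #|Om| = (#|U| * #|V|)%N by rewrite (bij_eq_card bphi) card_prod.
have eAB : forall a b, prob_of (fun _ : Om => c) (fun w => (x (phi w).1, y (phi w).2)) (a, b)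
   = c * (#|[pred u | x u == a]| * #|[pred v | y v == b]|)%:R.
  move=> a b; rewrite /prob_of -cardX -(sum_const_pred _ _ bphi).
  by apply: eq_bigl => w; rewrite xpair_eqE.
have eA : forall a, prob_of (fun _ : Om => c) (fun w => x (phi w).1) a
   = c * (#|[pred u | x u == a]| * #|V|)%:R.
  move=> a; rewrite /prob_of -cardX.
  rewrite -(eq_card (A := [predX [pred u | x u == a] & predT])); last first.
     by move=> z; rewrite !inE andbT.
  rewrite -(sum_const_pred _ _ bphi).
  by apply: eq_bigl => w; rewrite !inE andbT.
have eB : forall b, prob_of (fun _ : Om => c) (fun w => y (phi w).2) b
   = c * (#|U| * #|[pred v | y v == b]|)%:R.
  move=> b; rewrite /prob_of -cardX.
  rewrite -(eq_card (A := [predX predT & [pred v | y v == b]])); last first.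
     by move=> z; rewrite !inE.
  rewrite -(sum_const_pred _ _ bphi).
  by apply: eq_bigl => w; rewrite !inE.
rewrite /mutual_info; apply: big1 => a _; apply: big1 => b _ /=.
case: ifP => // /negbT H.
have E : prob_of (fun _ : Om => c) (fun w => (x (phi w).1, y (phi w).2)) (a, b) =
  prob_of (fun _ : Om => c) (fun w => x (phi w).1) a *
  prob_of (fun _ : Om => c) (fun w => y (phi w).2) b.
  rewrite eAB eA eB cardOm in hc *.
  rewrite !natrM in hc *.
  set u := (#|U|%:R : R) in hc *. set v := (#|V|%:R : R) in hc *.
  set a1 := (#|[pred u | x u == a]|%:R : R). set b1 := (#|[pred v | y v == b]|%:R : R).
  transitivity ((c * (u * v)) * (c * (a1 * b1))); first by rewrite hc mul1r.
  ring.
rewrite -E divff // /log2 ln1 mul0r mulr0 //.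
Qed.

Lemma pow2_gt0 n : (0 < 2 ^ n)%N. Proof. by rewrite expn_gt0. Qed.
Definition zpow n : 'I_(2 ^ n) := Ordinal (pow2_gt0 n).

Lemma idx_lt N K (k : 'I_K) (s : 'I_N.+1) : (k * N.+1 + s < N.+1 * K)%N.
Proof.
have hk := ltn_ord k; have hs := ltn_ord s.
have : (k * N.+1 + s < k.+1 * N.+1)%N by rewrite mulSn addnC ltn_add2r.
move=> h; apply: (leq_trans h); rewrite mulnC leq_mul2l /=; exact: hk.
Qed.
Definition idx N K (k : 'I_K) (s : 'I_N.+1) : 'I_(N.+1 * K) := Ordinal (idx_lt k s).

Definition shift N K (T : {ffun 'I_K -> 'I_N.+1}) (i : nat) : nat :=
  if insub i is Some i' then nat_of_ord (T i') else 0%N.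

Definition dvec N K (T : {ffun 'I_K -> 'I_N.+1}) : {ffun 'I_(N.+1 * K) -> 'I_N.+1} :=
  [ffun j : 'I_(N.+1 * K) => Ordinal (ltn_pmod ((j %% N.+1) + shift T (j %/ N.+1))%N (ltn0Sn N))].

Lemma dvec_RS N K T : @D_RS N.+1 K (@dvec N K T).
Proof. by exists (shift T) => j; rewrite ffunE. Qed.

Definition Tof N K (D S : {ffun 'I_K -> 'I_N.+1}) : {ffun 'I_K -> 'I_N.+1} :=
  [ffun j => (D j - S j)%R].

Lemma dvec_idx N K (D S : {ffun 'I_K -> 'I_N.+1}) k :
  @dvec N K (Tof D S) (idx k (S k)) = D k.
Proof.
apply: val_inj; rewrite ffunE /=.
have -> : ((k * N.+1 + S k) %/ N.+1 = k)%N.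
  by rewrite divnMDl // divn_small ?addn0 // ltn_ord.
rewrite /shift valK ffunE /=.
rewrite modnMDl (modn_small (ltn_ord (S k))) modnDmr.
rewrite addnA modnDmr addnAC subnKC; last exact: ltnW (ltn_ord (S k)).
by rewrite modnDl modn_small.
Qed.

Definition Dof N K (k : 'I_K) (u : {ffun {j : 'I_K | j != k} -> 'I_N.+1})
  (dk : 'I_N.+1) : {ffun 'I_K -> 'I_N.+1} :=
  [ffun j => match (insub j : option {j0 : 'I_K | j0 != k}) with
             | Some j' => u j' | None => dk end].

Definition OmT N K F := (files N.+1 F * {ffun 'I_K -> 'I_N.+1} * unit * {ffun 'I_K -> 'I_N.+1})%type.
Definition UT N K (k : 'I_K) := {ffun {j : 'I_K | j != k} -> 'I_N.+1}.
Definition VT N K F := (files N.+1 F * 'I_N.+1 * unit * {ffun 'I_K -> 'I_N.+1})%type.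

Definition phi N K F (k : 'I_K) (w : OmT N K F) : UT N k * VT N K F :=
  let: (W, D, p, Sk) := w in
  ([ffun j : {j : 'I_K | j != k} => D (val j)], (W, D k, p, Tof D Sk)).

Definition psi N K F (k : 'I_K) (z : UT N k * VT N K F) : OmT N K F :=
  let: (u, (W, dk, p, T)) := z in
  (W, Dof u dk, p, [ffun j => (Dof u dk j - T j)%R]).

Lemma phi_bij N K F k : bijective (@phi N K F k).
Proof.
exists (@psi N K F k).
- case=> [[[W D] p] S] /=.
  have eD : Dof [ffun j : {j : 'I_K | j != k} => D (val j)] (D k) = D.
    apply/ffunP => j; rewrite ffunE.
    case: insubP => [j' _ <-|]; first by rewrite ffunE.
    by rewrite negbK => /eqP ->.
  rewrite eD; congr (_, _, _, _); apply/ffunP => j; rewrite !ffunE.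
  by rewrite opprB addrC subrK.
- case=> u [[[W dk] p] T] /=.
  congr (_, (_, _, _, _)).
  + by apply/ffunP => j; rewrite !ffunE valK.
  + by rewrite ffunE insubF // eqxx.
  + apply/ffunP => j; rewrite !ffunE.
    by rewrite opprB addrC subrK.
Qed.

Theorem theorem4 (R : realType) (N K : nat) :
  exists B : nat, forall F mF rF : nat,
    nonprivate_scheme F mF rF (@D_RS N K) ->
    private_scheme R N K F mF rF B.
Proof.
case: N => [|N].
  exists 1%N => F mF rF _.
  exists unit, unit, {ffun 'I_K -> 'I_0}, (fun _ => 1), (fun _ _ => 1).
  split.
    split.
    - by move=> _; apply: ler01.
    - by rewrite sumr_const card_unit.
    - by move=> _ _; apply: ler01.
    - by move=> k; rewrite sumr_const card_unit.
    - by rewrite card_ffun !card_ord; case: K => [|K] //; rewrite exp0n.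
  exists (fun _ _ _ _ => zpow mF), (fun _ _ _ _ => zpow rF), (fun D _ _ => D),
    (fun _ _ _ _ _ => zpow F).
  move=> Om prob Wv Dv Pv Sv Z X Dtilde. split.
    by case=> [[[W D] p] Sk] _ k; by have := ltn_ord (D k); rewrite ltn0.
  move=> k; rewrite /mutual_info; apply: big1 => a _; apply: big1 => b _.
  by have := ltn_ord b.2; rewrite ltn0.
exists (N.+1 ^ K)%N => F mF rF [C0 [E0 [G0 H0]]].
exists unit, 'I_N.+1, {ffun 'I_K -> 'I_N.+1}, (fun _ => 1), (fun _ _ => N.+1%:R^-1).
split.
  split.
  - by move=> _; apply: ler01.
  - by rewrite sumr_const card_unit.
  - by move=> _ _; rewrite invr_ge0 ler0n.
  - move=> k; rewrite sumr_const (_ : #|_| = N.+1); last exact: card_ord.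
    by rewrite -[_ *+ _]mulr_natr mulVf // pnatr_eq0.
  - by rewrite card_ffun !card_ord.
exists (fun k s _ W => C0 (idx k s) W), (fun W D _ Sk => E0 W (dvec (Tof D Sk))),
  (fun D _ Sk => Tof D Sk), (fun k _ s et cz => G0 (idx k s) (dvec et.2) et.1 cz.1).
move=> Om prob Wv Dv Pv Sv Z X Dtilde; split.
  case=> [[[W D] p] Sk] _ k /=.
  by rewrite -(H0 W _ (dvec_RS _)) dvec_idx.
move=> k.
set c := ((2 ^ F)%:R ^- N.+1 * N.+1%:R ^- K * 1 * (N.+1%:R^-1) ^+ K : R).
have eprob : prob = fun _ => c.
  by apply: funext => -[[[W D] p] Sk]; rewrite /prob /c prodr_const card_ord.
pose yfun (v : VT N K F) := let: (W, dk, p, T) := v in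
  ((C0 (idx k (dk - T k)%R) W, (dk - T k)%R), (E0 W (dvec T), T), dk).
have eD : Dtilde k = fun w => id (phi k w).1.
  by apply: funext => -[[[W D] p] Sk].
have eY : (fun w => (Z k w, X w, Dv w k)) = fun w => yfun (phi k w).2.
  apply: funext => -[[[W D] p] Sk] /=.
  by rewrite {2 4}/Tof ffunE opprB addrC subrK.
rewrite eprob eD eY.
apply: (indep_const id yfun (phi_bij N F k)).
rewrite /Om !card_prod !card_ffun !card_ord card_unit /c !natrM !natrX.
have h2 : (2 : R) != 0 by rewrite pnatr_eq0.
have hN : (N.+1%:R : R) != 0 by rewrite pnatr_eq0.
rewrite !mulr1 exprVn; field.
by rewrite !expf_neq0.
Qed.
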